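(* Let $(F,(a,b))$ be an edge-rooted graph such that $F$ is rigid and every two distinct vertices of $F$ have a triangle $K_3$ in their common neighbourhood. Then the set of homomorphisms from $F^{\mathrm{sym}}$ to itself is exactly $\{\mathrm{id},\sigma\}$, where $\sigma$ is an automorphism of $F^{\mathrm{sym}}$ with $\sigma(a)=b$ and $\sigma(b)=a$.
   Context: An edge-rooted graph is a pair $(F,(a,b))$ with $F$ a finite simple graph and $(a,b)$ an orientation of an edge of $F$. A graph is rigid if its only endomorphism is the identity. The symmetrization $F^{\mathrm{sym}}$ is obtained by taking two disjoint copies $F_1,F_2$ of $F$, with root vertices $a_1,b_1$ in $F_1$ and $a_2,b_2$ in $F_2$ (copies of $a,b$), and identifying $a_1$ with $b_2$ (call the resulting vertex $a$) and $b_1$ with $a_2$ (call it $b$); it is considered as edge-rooted graph $(F^{\mathrm{sym}},(a,b))$. *)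

(* Defs.v *)
(* Finite simple graphs as symmetric irreflexive relations on a finType. *)
From mathcomp Require Import all_boot.
Set Implicit Arguments. Unset Strict Implicit. Unset Printing Implicit Defensive.

Definition is_hom (U W : Type) (eU : rel U) (eW : rel W) (f : U -> W) : Prop :=
  forall x y, eU x y -> eW (f x) (f y).

Definition is_automorphism (U : Type) (eU : rel U) (f : U -> U) : Prop :=
  bijective f /\ forall x y, eU (f x) (f y) = eU x y.

Definition rigid (U : Type) (eU : rel U) : Prop :=
  forall f : U -> U, is_hom eU eU f -> f =1 id.

Definition triangle_in_common_nbhd (U : Type) (eU : rel U) (u v : U) : Prop :=
  exists x y z : U, [&& eU x y, eU y z, eU x z,
                        eU u x, eU u y, eU u z,
                        eU v x, eU v y & eU v z].

Section Symmetrization.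
Variables (V : finType) (e : rel V) (a b : V).

(* vertices of F^sym: all of F_1 (inl), plus the non-root vertices of F_2 (inr) *)
Definition nonroot2 : Type := {v : V | (v != a) && (v != b)}.
Definition sym_vertex : Type := (V + nonroot2)%type.

Definition copy1 (v : V) : sym_vertex := inl v.

(* copy of v in F_2, with a_2 identified with b_1 and b_2 identified with a_1 *)
Definition copy2 (v : V) : sym_vertex :=
  if v == a then inl b else if v == b then inl a else
  match (insub v : option nonroot2) with Some w => inr w | None => inl v end.

Definition sym_edge : rel sym_vertex := fun x y =>
  [exists u, exists w, [&& e u w, copy1 u == x & copy1 w == y]] ||
  [exists u, exists w, [&& e u w, copy2 u == x & copy2 w == y]].

Definition sym_a : sym_vertex := inl a.
Definition sym_b : sym_vertex := inl b.

End Symmetrization.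

Arguments sym_a {V} a b.
Arguments sym_b {V} a b.
Arguments sym_edge {V} e a b.
Arguments sym_vertex {V} a b.

(* Main.v *)
Require Import Defs.
From mathcomp Require Import all_boot.
Set Implicit Arguments. Unset Strict Implicit. Unset Printing Implicit Defensive.

Section S.
Variables (V : finType) (e : rel V) (a b : V).
Hypotheses (esy : symmetric e) (eirr : irreflexive e) (eab : e a b).

Let X := sym_vertex a b.
Let E := sym_edge e a b.

Lemma ab_neq : a != b.
Proof. by apply/eqP => h; move: eab; rewrite h eirr. Qed.

Lemma copy2_a : copy2 a b a = inl b.
Proof. by rewrite /copy2 eqxx. Qed.

Lemma copy2_b : copy2 a b b = inl a.
Proof. by rewrite /copy2 eq_sym (negbTE ab_neq) eqxx. Qed.

Lemma copy2_val (w : nonroot2 a b) : copy2 a b (val w) = inr w.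
Proof.
have /andP[h1 h2] := valP w.
by rewrite /copy2 (negbTE h1) (negbTE h2) valK.
Qed.

Lemma copy2_inl v x : copy2 a b v = inl x -> (v = a /\ x = b) \/ (v = b /\ x = a).
Proof.
rewrite /copy2; case: eqP => [-> [<-]|ha]; first by left.
case: eqP => [-> [<-]|hb]; first by right.
case: insubP => [w _ _ //|].
by move/negP; case; apply/andP; split; apply/eqP.
Qed.

Definition sig (x : X) : X :=
  match x with inl v => copy2 a b v | inr w => inl (val w) end.

Lemma sig_copy2 v : sig (copy2 a b v) = inl v.
Proof.
rewrite /copy2; case: eqP => [->|ha] /=; first by rewrite copy2_b.
case: eqP => [->|hb] /=; first by rewrite copy2_a.
case: insubP => [w _ /= -> //|].
by move/negP; case; apply/andP; split; apply/eqP.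
Qed.

Lemma sigK x : sig (sig x) = x.
Proof. by case: x => [v|w] /=; [rewrite sig_copy2 | rewrite copy2_val]. Qed.

Lemma sig_inj : injective sig.
Proof. exact: can_inj sigK. Qed.

Lemma copy2_inj : injective (copy2 a b).
Proof. by move=> u w h; have := sig_copy2 u; rewrite h sig_copy2 => -[]. Qed.

Lemma EP x y : E x y <-> (exists u w, [/\ e u w, x = inl u & y = inl w]) \/
                         (exists u w, [/\ e u w, x = copy2 a b u & y = copy2 a b w]).
Proof.
rewrite /E /sym_edge; split.
  case/orP => /existsP[u /existsP[w /and3P[h /eqP h1 /eqP h2]]].
    by left; exists u, w.
  by right; exists u, w.
case=> -[u [w [h h1 h2]]]; apply/orP; [left|right];
  apply/existsP; exists u; apply/existsP; exists w; rewrite h h1 h2 !eqxx //.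
Qed.

Lemma E_sig x y : E x y -> E (sig x) (sig y).
Proof.
case/EP => -[u [w [h -> ->]]]; apply/EP.
  by right; exists u, w.
by left; exists u, w; rewrite !sig_copy2.
Qed.

Lemma E_sigE x y : E (sig x) (sig y) = E x y.
Proof.
apply/idP/idP; last exact: E_sig.
by move/E_sig; rewrite !sigK.
Qed.

Lemma E_irr x : E x x = false.
Proof.
apply/negP; case/EP => -[u [w [h h1 h2]]].
  by move: h; rewrite h1 in h2; case: h2 => ->; rewrite eirr.
by move: h; rewrite h1 in h2; rewrite (copy2_inj h2) eirr.
Qed.

Lemma E_sym x y : E x y -> E y x.
Proof.
case/EP => -[u [w [h h1 h2]]]; apply/EP; [left|right]; exists w, u;
  by rewrite esy.
Qed.

Lemma E_inl u w : E (inl u) (inl w) -> e u w.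
Proof.
case/EP => -[u' [w' [h h1 h2]]]; first by case: h1 h2 => -> [->].
case: (copy2_inl (esym h1)) => -[hu hx]; case: (copy2_inl (esym h2)) => -[hw hy];
  subst; rewrite ?eirr // in h *; by rewrite esy.
Qed.

Definition hs (s : bool) : X -> X := if s then sig else id.
Lemma hsK s x : hs s (hs s x) = x.
Proof. by case: s => //=; rewrite sigK. Qed.
Lemma E_hs s x y : E (hs s x) (hs s y) = E x y.
Proof. by case: s => //=; rewrite E_sigE. Qed.

Definition side s (t : X) : bool := if hs s t is inl _ then true else false.
Definition pure s t := side s t && ~~ side (~~ s) t.

Lemma side_sig s t : side s (sig t) = side (~~ s) t.
Proof. by case: s; rewrite /side /= ?sigK. Qed.

Lemma pure_nb0 p t : pure false p -> E p t -> side false t.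
Proof.
rewrite /pure /side /=; case: p => [v|w] //=.
case: t => [u|w] // h /EP [] [u' [w' [_ h1 h2]]] //.
case: (copy2_inl (esym h1)) => -[hu hv]; subst; by move: h; rewrite ?copy2_a ?copy2_b.
Qed.

Lemma pure_nb s p t : pure s p -> E p t -> side s t.
Proof.
case: s; last exact: pure_nb0.
move=> hp ht; rewrite -[t]sigK side_sig /=.
apply: (@pure_nb0 (sig p)); last by rewrite E_sigE.
by move: hp; rewrite /pure !side_sig.
Qed.

Lemma nonpure t : side false t -> side true t -> t = inl a \/ t = inl b.
Proof.
case: t => [v|w] //= _; rewrite /side /= /copy2.
case: eqP => [->|ha]; first by left.
case: eqP => [->|hb]; first by right.
case: insubP => [w _ _ //|].
by move/negP => hn; exfalso; apply: hn; apply/andP; split; apply/eqP.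
Qed.

Lemma some_side t : side false t || side true t.
Proof. by case: t => [v|w]. Qed.

Lemma tri_pure p q r : E p q -> E q r -> E p r ->
  exists s, exists2 t, t \in [:: p; q; r] & pure s t.
Proof.
move=> hpq hqr hpr.
have P t : (exists s, pure s t) \/ (t = inl a \/ t = inl b).
  have := some_side t.
  case h0: (side false t); case h1: (side true t) => //= _.
  - by right; apply: nonpure.
  - by left; exists false; rewrite /pure /= h0 h1.
  - by left; exists true; rewrite /pure /= h0 h1.
case: (P p) => [[s hs']|Hp]; first by exists s, p; rewrite ?inE ?eqxx.
case: (P q) => [[s hs']|Hq]; first by exists s, q; rewrite ?inE ?eqxx ?orbT.
case: (P r) => [[s hs']|Hr]; first by exists s, r; rewrite ?inE ?eqxx ?orbT.
exfalso.
by case: Hp => ?; case: Hq => ?; case: Hr => ?; subst; rewrite ?E_irr in hpq hqr hpr.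
Qed.

Hypothesis rig : rigid e.
Hypothesis tri : forall u v : V, u != v -> triangle_in_common_nbhd e u v.

Lemma tri' u v : u != v -> exists x y z, [/\ e x y, e y z & e x z] /\ [/\ e u x, e u y & e u z] /\ [/\ e v x, e v y & e v z].
Proof.
move=> h; have [x [y [z H]]] := tri h; exists x, y, z.
by case/and5P: H => -> -> -> -> /and5P[-> -> -> -> ->].
Qed.

Lemma e_E u w : e u w -> E (inl u) (inl w).
Proof. by move=> h; apply/EP; left; exists u, w. Qed.

Lemma pure_side s s' t : pure s t -> side s' t -> s' = s.
Proof. by rewrite /pure; case: s; case: s' => // /andP[_ /negP]. Qed.

Lemma step1 f : is_hom E E f -> exists s, forall v, f (inl v) = hs s (inl v).
Proof.
move=> hf.
have [x [y [z [[hxy hyz hxz] _]]]] := tri' ab_neq.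
have [s [t ht hpt]] := tri_pure (hf _ _ (e_E hxy)) (hf _ _ (e_E hyz)) (hf _ _ (e_E hxz)).
have [t0 [ht0 hpt0]] : exists t0, f (inl t0) = t /\ pure s (f (inl t0)).
  by move: ht hpt; rewrite !inE => /or3P[] /eqP -> ?; [exists x|exists y|exists z].
have Hside : forall v, side s (f (inl v)).
  move=> v; case: (eqVneq v t0) => [->|hne]; first by case/andP: hpt0.
  have [x' [y' [z' [[h1 h2 h3] [[h7 h8 h9] [h4 h5 h6]]]]]] := tri' hne.
  have [s' [t' ht' hpt']] := tri_pure (hf _ _ (e_E h1)) (hf _ _ (e_E h2)) (hf _ _ (e_E h3)).
  have Hs : side s t'.
    move: ht'; rewrite !inE => /or3P[] /eqP ->; apply: (pure_nb hpt0); apply: hf; apply: e_E; [exact: h4|exact: h5|exact: h6].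
  have ? := pure_side hpt' Hs; subst s'.
  apply: (pure_nb hpt'); apply: E_sym.
  by move: ht'; rewrite !inE => /or3P[] /eqP ->; apply: hf; apply: e_E;
     [exact: h7 | exact: h8 | exact: h9].
exists s.
pose g v := if hs s (f (inl v)) is inl w then w else v.
have hg : is_hom e e g.
  move=> u w huw; rewrite /g.
  have := Hside u; have := Hside w; rewrite /side.
  have := hf _ _ (e_E huw); rewrite -(E_hs s).
  case: (hs s (f (inl u))) => // u'; case: (hs s (f (inl w))) => // w' h _ _.
  exact: E_inl.
move=> v; have := rig hg v; rewrite /g.
have := Hside v; rewrite /side.
case E1: (hs s (f (inl v))) => [w|w] //= _ hw.
by rewrite -(hsK s (f (inl v))) E1 hw.
Qed.

Lemma main_sec : exists sigma : X -> X,
    [/\ is_automorphism E sigma,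
        sigma (sym_a a b) = sym_b a b,
        sigma (sym_b a b) = sym_a a b &
        forall f : X -> X,
          is_hom E E f <-> (f =1 id \/ f =1 sigma)].
Proof.
exists sig; split.
- split; first by exists sig; move=> x; rewrite sigK.
  by move=> x y; rewrite E_sigE.
- exact: copy2_a.
- exact: copy2_b.
move=> f; split; last first.
  by case=> Hf x y h; rewrite !Hf //; exact: E_sig.
move=> hf; have [s Hs] := step1 hf.
have hf' : is_hom E E (f \o sig) by move=> x y h; apply: hf; apply: E_sig.
have [s' Hs'] := step1 hf'.
have Hss : s' = ~~ s.
  have := Hs b; have := Hs' a; rewrite /= copy2_a => -> H.
  have nab := ab_neq.
  move: H; case: s Hs; case: s' Hs' => //= _ _ H.
    by move: nab; rewrite copy2_a copy2_b in H; case: H => ->; rewrite eqxx.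
  by move: nab; case: H => ->; rewrite eqxx.
have Hf : f =1 hs s.
  case=> [v|w]; first exact: Hs.
  have := Hs' (val w); rewrite /= copy2_val => ->; subst s'.
  by case: s {Hs Hs'} => //=; rewrite copy2_val.
by move: Hf; case: s {Hs Hss} => Hf; [right|left].
Qed.
End S.

Theorem mainTheorem11 (V : finType) (e : rel V) (a b : V) :
  symmetric e -> irreflexive e -> e a b ->
  rigid e ->
  (forall u v : V, u != v -> triangle_in_common_nbhd e u v) ->
  exists sigma : sym_vertex a b -> sym_vertex a b,
    [/\ is_automorphism (sym_edge e a b) sigma,
        sigma (sym_a a b) = sym_b a b,
        sigma (sym_b a b) = sym_a a b &
        forall f : sym_vertex a b -> sym_vertex a b,
          is_hom (sym_edge e a b) (sym_edge e a b) f <-> (f =1 id \/ f =1 sigma)].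
Proof. move=> h1 h2 h3 h4 h5; exact: main_sec. Qed.
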